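(* Let $Q$ be a reduced quantale with bottom element $0$. Then the m-filter $\mathcal{F}_{\nmid0}$ is conormal over $Q$. Moreover, for $x,y\in Q$, $\overline x=\overline y$ in $Q_{\mathcal{F}_{\nmid0}}$ if and only if $\hbar(x)=\hbar(y)$, where $\hbar:Q\to Q$, $\hbar(q)=\sum\{q'\in Q:qq'=0\}$.
   Context: A quantale is a poset $Q$ with all nonempty joins $\sum$, top $1$, commutative associative multiplication with unit $1$ distributing over nonempty joins. $Q$ with bottom $0$ is reduced if $a^2=0$ implies $a=0$. An m-filter is a subset of $Q$ containing $1$, upward closed and closed under multiplication. For $a\in Q$ the codense filter is $\mathcal{F}_{\nmid a}=\{q\in Q: \text{for all }x\in Q,\ qx\le a\Rightarrow x\le a\}$ (an m-filter). For $a,b\in Q$: $a\preceq^1_\mathcal{F}b$ means there are families $(a_i)$ in $Q$, $(s_i)$ in $\mathcal{F}$ with $a\le\sum a_i$ and $s_ia_i\le b$; $a\preceq^n_\mathcal{F}b$ means a chain of $n$ such steps; $a\preceq_\mathcal{F}b$ means $a\preceq^n_\mathcal{F}b$ for some $n\ge1$. $Q_\mathcal{F}$ is $Q$ modulo $a\sim b\iff a\preceq_\mathcal{F}b\preceq_\mathcal{F}a$, with classes $\overline a$. $\mathcal{C}$ is conormal over $Q$ (as a module over itself) if for all $m,n\in Q$ with $m\preceq^1_\mathcal{C}n$ there is $s\in\mathcal{C}$ with $sm\le n$. *)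

(* Defs.v *)
Set Implicit Arguments.

(** The join of a subset S is [qsup S]; it is only specified for nonempty S. *)
Record quantale := Quantale {
  qcar :> Type;
  qle : qcar -> qcar -> Prop;
  qle_refl : forall x, qle x x;
  qle_antisym : forall x y, qle x y -> qle y x -> x = y;
  qle_trans : forall x y z, qle x y -> qle y z -> qle x z;
  qsup : (qcar -> Prop) -> qcar;
  qsup_ub : forall (S : qcar -> Prop) x, S x -> qle x (qsup S);
  qsup_least : forall (S : qcar -> Prop) u, (exists x, S x) ->
      (forall x, S x -> qle x u) -> qle (qsup S) u;
  qone : qcar;
  qle_one : forall x, qle x qone;
  qmul : qcar -> qcar -> qcar;
  qmulC : forall x y, qmul x y = qmul y x;
  qmulA : forall x y z, qmul x (qmul y z) = qmul (qmul x y) z;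
  qmul1 : forall x, qmul qone x = x;
  qmul_sup : forall (S : qcar -> Prop) a, (exists x, S x) ->
      qmul a (qsup S) = qsup (fun z => exists x, S x /\ z = qmul a x)
}.

Section Defs.
Variable Q : quantale.
Local Notation "x <= y" := (qle Q x y).
Local Notation "x * y" := (qmul Q x y).

Definition is_bottom (z : Q) : Prop := forall x : Q, z <= x.

Definition reduced (z : Q) : Prop := forall a : Q, a * a = z -> a = z.

Definition fsup (I : Type) (f : I -> Q) : Q := qsup Q (fun z => exists i, z = f i).

Definition mfilter (F : Q -> Prop) : Prop :=
  F (qone Q) /\ (forall x y, F x -> x <= y -> F y) /\
  (forall x y, F x -> F y -> F (x * y)).

(** Codense filter F_{∤a}. *)
Definition codense (a : Q) : Q -> Prop :=
  fun q => forall x : Q, q * x <= a -> x <= a.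

Definition preceq1 (F : Q -> Prop) (a b : Q) : Prop :=
  exists (I : Type) (ai : I -> Q) (si : I -> Q),
    inhabited I /\ a <= fsup ai /\ (forall i, F (si i)) /\
    (forall i, si i * ai i <= b).

Fixpoint preceqn (F : Q -> Prop) (n : nat) (a b : Q) : Prop :=
  match n with
  | O => a = b
  | S n' => exists c, preceq1 F a c /\ preceqn F n' c b
  end.

Definition preceq (F : Q -> Prop) (a b : Q) : Prop :=
  exists n : nat, (1 <= n)%nat /\ preceqn F n a b.

(** The equivalence defining Q_F: classes ā = b̄ iff a ~ b. *)
Definition Fequiv (F : Q -> Prop) (a b : Q) : Prop :=
  preceq F a b /\ preceq F b a.

Definition conormal (F : Q -> Prop) : Prop :=
  forall m n : Q, preceq1 F m n -> exists s, F s /\ s * m <= n.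

Definition hbar (z : Q) (q : Q) : Q := qsup Q (fun q' => q * q' = z).

End Defs.

Arguments is_bottom {Q}.
Arguments reduced {Q}.
Arguments codense {Q}.
Arguments conormal {Q}.
Arguments Fequiv {Q}.
Arguments hbar {Q}.
Arguments preceq {Q}.
Arguments preceq1 {Q}.
Arguments preceqn {Q}.
Arguments mfilter {Q}.
Arguments fsup {Q I}.

(* Main.v *)
Require Import Defs.

Section S.
Variable Q : quantale.
Variable z : Q.
Hypothesis hz : is_bottom z.
Hypothesis hred : reduced z.
Local Notation "x <= y" := (qle Q x y).
Local Notation "x * y" := (qmul Q x y).

Definition join2 (a b : Q) : Q := qsup Q (fun w => w = a \/ w = b).

Lemma join2_l a b : a <= join2 a b.
Proof. apply qsup_ub; auto. Qed.
Lemma join2_r a b : b <= join2 a b.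
Proof. apply qsup_ub; auto. Qed.

Lemma le_join2 a b : a <= b -> join2 a b = b.
Proof.
  intro H. apply qle_antisym.
  - apply qsup_least. exists a; auto. intros x [->| ->]; auto using qle_refl.
  - apply join2_r.
Qed.

Lemma mono_r a b c : a <= b -> c * a <= c * b.
Proof.
  intro H. rewrite <- (le_join2 a b H). unfold join2. rewrite qmul_sup by (exists a; auto).
  apply qsup_ub. exists a; auto.
Qed.

Lemma mono_l a b c : a <= b -> a * c <= b * c.
Proof. intro H. rewrite (qmulC _ a), (qmulC _ b). now apply mono_r. Qed.

Lemma mul_le a b : a * b <= a.
Proof.
  assert (E : a * qone Q = a) by (rewrite qmulC; apply qmul1).
  apply qle_trans with (a * qone Q). apply mono_r, qle_one. rewrite E. apply qle_refl.
Qed.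

Lemma mul_le' a b : a * b <= b.
Proof. rewrite qmulC. apply mul_le. Qed.

Lemma le0 a : a <= z -> a = z.
Proof. intro H. apply qle_antisym; [exact H | apply hz]. Qed.

Lemma mul0 x : x * z = z.
Proof. apply le0, mul_le'. Qed.

Lemma hbar_ann q : q * hbar z q = z.
Proof.
  unfold hbar. rewrite qmul_sup by (exists z; apply mul0).
  apply le0, qsup_least. exists (q * z). exists z; split; auto; apply mul0.
  intros w [x [Hx ->]]. rewrite Hx. apply qle_refl.
Qed.

Lemma hbar_ub q w : q * w = z -> w <= hbar z q.
Proof. intro H. apply qsup_ub. exact H. Qed.

Lemma join2_mul c a b u : c * a <= u -> c * b <= u -> c * join2 a b <= u.
Proof.
  intros Ha Hb. unfold join2. rewrite qmul_sup by (exists a; auto).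
  apply qsup_least. exists (c * a); exists a; auto.
  intros w [x [[-> | ->] ->]]; auto.
Qed.

Lemma dense_s n : codense z (join2 n (hbar z n)).
Proof.
  intros x Hx.
  assert (H1 : n * x = z).
  { apply le0. eapply qle_trans; [|exact Hx]. apply mono_l, join2_l. }
  assert (H2 : hbar z n * x <= z).
  { eapply qle_trans; [|exact Hx]. apply mono_l, join2_r. }
  assert (H3 : x <= hbar z n) by now apply hbar_ub.
  assert (H4 : x * x = z).
  { apply le0. eapply qle_trans; [|exact H2]. now apply mono_l. }
  rewrite (hred x H4). apply qle_refl.
Qed.

Lemma s_mul n m : hbar z n * m = z -> join2 n (hbar z n) * m <= n.
Proof.
  intro H. rewrite qmulC. apply join2_mul.
  - apply mul_le'.
  - rewrite qmulC, H. apply hz.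
Qed.

Lemma mulCA a b c : a * (b * c) = b * (a * c).
Proof. rewrite !qmulA, (qmulC _ a b). reflexivity. Qed.

Lemma conormal_main : conormal (codense z).
Proof.
  intros m n [I [ai [si [[i0] [Hm [Hs Hsn]]]]]].
  exists (join2 n (hbar z n)). split; [apply dense_s|].
  apply s_mul. set (t := hbar z n * m).
  assert (Ht : t <= hbar z n) by apply mul_le.
  assert (Hi : forall i, t * ai i = z).
  { intro i. apply le0, (Hs i). rewrite mulCA.
    eapply qle_trans; [apply mono_r, Hsn|].
    eapply qle_trans; [apply mono_l, Ht|]. rewrite qmulC, hbar_ann. apply qle_refl. }
  assert (Htm : t * m = z).
  { apply le0. eapply qle_trans; [apply mono_r, Hm|].
    unfold fsup. rewrite qmul_sup by (exists (ai i0); eauto).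
    apply qsup_least. exists (t * ai i0); eauto.
    intros w [x [[i ->] ->]]. rewrite Hi. apply qle_refl. }
  apply hred. apply le0. rewrite <- Htm. apply mono_r. apply mul_le'.
Qed.

Lemma pre1_ann x y : preceq1 (codense z) x y -> forall w, y * w = z -> x * w = z.
Proof.
  intros [I [ai [si [[i0] [Hm [Hs Hsn]]]]]] w Hw.
  apply le0. eapply qle_trans; [apply mono_l, Hm|]. rewrite qmulC.
  unfold fsup. rewrite qmul_sup by (exists (ai i0); eauto).
  apply qsup_least. exists (w * ai i0); eauto.
  intros v [a [[i ->] ->]]. apply (Hs i). rewrite mulCA.
  rewrite <- Hw, (qmulC _ y). apply mono_r, Hsn.
Qed.

Lemma preN_ann k x y : preceqn (codense z) k x y -> forall w, y * w = z -> x * w = z.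
Proof.
  revert x. induction k as [|k IH]; simpl; intros x H w Hw.
  - subst; auto.
  - destruct H as [c [H1 H2]]. eapply pre1_ann; eauto.
Qed.

Lemma hbar_le x y : (forall w, y * w = z -> x * w = z) -> hbar z y <= hbar z x.
Proof.
  intro H. apply qsup_least. exists z; apply mul0.
  intros w Hw. apply hbar_ub, H, Hw.
Qed.

Lemma pre_of_hbar x y : hbar z x = hbar z y -> preceq (codense z) x y.
Proof.
  intro E. exists 1%nat. split; [auto|]. exists y. split; [|reflexivity].
  exists unit, (fun _ => x), (fun _ => join2 y (hbar z y)).
  split; [constructor; exact tt|]. split; [apply qsup_ub; exists tt; reflexivity|].
  split; [intros; apply dense_s|].
  intros _. apply s_mul. rewrite <- E, qmulC. apply hbar_ann.
Qed.

End S.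

Theorem mainTheorem15 (Q : quantale) (z : Q) (hz : is_bottom z)
  (hred : reduced z) :
  conormal (codense z) /\
  (forall x y : Q, Fequiv (codense z) x y <-> hbar z x = hbar z y).
Proof.
  split. apply conormal_main; auto.
  intros x y. split.
  - intros [[k [_ Hk]] [l [_ Hl]]]. apply qle_antisym; apply hbar_le; auto.
    + eapply preN_ann; eauto.
    + eapply preN_ann; eauto.
  - intro E. split; apply pre_of_hbar; auto.
Qed.
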